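(* Let $u$ be a smooth solution of the equivariant Skyrme equation in $\Omega$ with $u(t,0)=0$. Then \[ \lim_{T\to0^+}\int_0^T\frac{\sin^2u(T,r)}{2r^2}\,r\,dr=0. \]
   Context: Fix $\alpha>0$, $T_0>0$. The equivariant Skyrme equation is \[ \Big(1+\tfrac{\alpha^2\sin^2u}{r^2}\Big)(u_{tt}-u_{rr}) - \Big(1-\tfrac{\alpha^2\sin^2u}{r^2}\Big)\tfrac{u_r}{r} + \tfrac{\sin 2u}{2r^2}\big[\alpha^2(u_t^2-u_r^2)+1\big]=0. \] $\Omega=\{(t,r):0<t\le T_0,\ 0\le r\le t\}$; a smooth solution in $\Omega$ is a smooth function on $\Omega$ satisfying the equation for $r>0$. *)

(* Defs.v *)
From Stdlib Require Import Reals Lra.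
Open Scope R_scope.

Definition in_Omega (T0 t r : R) : Prop := 0 < t <= T0 /\ 0 <= r <= t.

Definition open2 (U : R -> R -> Prop) : Prop :=
  forall t r, U t r -> exists e, 0 < e /\
    forall t' r', Rabs (t' - t) < e -> Rabs (r' - r) < e -> U t' r'.

Definition cont2_on (U : R -> R -> Prop) (f : R -> R -> R) : Prop :=
  forall t r, U t r -> forall eps, 0 < eps -> exists d, 0 < d /\
    forall t' r', Rabs (t' - t) < d -> Rabs (r' - r) < d ->
      Rabs (f t' r' - f t r) < eps.

Definition dt_on (U : R -> R -> Prop) (f g : R -> R -> R) : Prop :=
  forall t r, U t r -> derivable_pt_lim (fun s => f s r) t (g t r).
Definition dr_on (U : R -> R -> Prop) (f g : R -> R -> R) : Prop :=
  forall t r, U t r -> derivable_pt_lim (fun s => f t s) r (g t r).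

Fixpoint Ck (k : nat) (U : R -> R -> Prop) (f : R -> R -> R) : Prop :=
  match k with
  | O => cont2_on U f
  | S k => cont2_on U f /\ exists ft fr : R -> R -> R,
            dt_on U f ft /\ dr_on U f fr /\ Ck k U ft /\ Ck k U fr
  end.

Definition smooth_on (U : R -> R -> Prop) (f : R -> R -> R) : Prop :=
  forall k, Ck k U f.

Definition skyrme_eq (alpha : R) (u ut ur utt urr : R -> R -> R) (t r : R) : Prop :=
  (1 + alpha ^ 2 * (sin (u t r)) ^ 2 / r ^ 2) * (utt t r - urr t r)
  - (1 - alpha ^ 2 * (sin (u t r)) ^ 2 / r ^ 2) * (ur t r / r)
  + sin (2 * u t r) / (2 * r ^ 2) * (alpha ^ 2 * ((ut t r) ^ 2 - (ur t r) ^ 2) + 1) = 0.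

Definition energy_density (u : R -> R -> R) (T : R) : R -> R :=
  fun r => (sin (u T r)) ^ 2 / (2 * r ^ 2) * r.

(* Main.v *)
Require Import Defs.
From Stdlib Require Import Reals Lra Psatz Classical ZArith ClassicalEpsilon.
From Coquelicot Require Import Coquelicot.
Open Scope R_scope.

Lemma cont2_2d U f t r : cont2_on U f -> U t r -> continuity_2d_pt f t r.
Proof.
  intros H Hu eps. destruct (H t r Hu eps (cond_pos eps)) as [d [dp Hd]].
  exists (mkposreal d dp). intros u v H1 H2. apply Hd; assumption.
Qed.

Lemma chain1 (g : R -> R) a b d : 0 < d ->
  (forall x x', a <= x <= b -> a <= x' <= b -> Rabs (x - x') < d -> Rabs (g x - g x') < 1) ->
  forall n : nat, forall x, a <= x <= b -> x <= a + INR n * (d/2) -> Rabs (g x) <= Rabs (g a) + INR n.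
Proof.
  intros dp Hg n. induction n as [|n IH]; intros x Hx Hxn.
  - simpl in *. assert (x = a) by lra. subst. lra.
  - rewrite S_INR in *. destruct (Rle_dec x (a + INR n * (d/2))) as [h|h].
    + specialize (IH x Hx h). lra.
    + assert (Hn : 0 <= INR n) by apply pos_INR.
      set (x' := a + INR n * (d/2)).
      assert (Hx' : a <= x' <= b) by (unfold x'; split; nra).
      specialize (IH x' Hx' (Rle_refl _)).
      assert (Rabs (x - x') < d) by (unfold x' in *; rewrite Rabs_right; nra).
      specialize (Hg x x' Hx Hx' H).
      assert (Rabs (g x) <= Rabs (g x') + Rabs (g x - g x')).
      { replace (g x) with (g x' + (g x - g x')) at 1 by ring. apply Rabs_triang. }
      lra.
Qed.

Lemma arch_n d L : 0 < d -> exists n : nat, L <= INR n * (d/2).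
Proof.
  intros dp. destruct (archimed (L / (d/2))) as [H1 _].
  destruct (Rle_dec (IZR (up (L/(d/2)))) 0) as [h|h].
  - exists 0%nat. simpl. assert (L/(d/2) < 0) by lra.
    assert (L < 0). { apply Rmult_lt_reg_r with (/(d/2)). apply Rinv_0_lt_compat; lra. rewrite Rmult_0_l. exact H. }
    lra.
  - exists (Z.to_nat (up (L/(d/2)))). rewrite INR_IZR_INZ, Z2Nat.id.
    + assert (L = L/(d/2) * (d/2)) by (field; lra). nra.
    + apply le_IZR. lra.
Qed.

Lemma rect_bound f a b c d : a <= b -> c <= d ->
  (forall x y, a <= x <= b -> c <= y <= d -> continuity_2d_pt f x y) ->
  exists M, forall x y, a <= x <= b -> c <= y <= d -> Rabs (f x y) <= M.
Proof.
  intros hab hcd Hc.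
  destruct (uniform_continuity_2d f a b c d Hc (mkposreal 1 Rlt_0_1)) as [del Hd]. simpl in Hd.
  destruct (arch_n del (b - a + (d - c)) (cond_pos del)) as [n Hn].
  exists (Rabs (f a c) + INR n + INR n). intros x y Hx Hy.
  assert (Hn0 : 0 <= INR n) by apply pos_INR.
  assert (Hdp := cond_pos del).
  assert (H1 : Rabs (f x y) <= Rabs (f x c) + INR n).
  { apply (chain1 (fun y => f x y) c d del Hdp).
    - intros y1 y2 Hy1 Hy2 Hyy. apply (Hd x y2 x y1 Hx Hy2 Hx Hy1).
      rewrite Rminus_diag, Rabs_R0. apply cond_pos. exact Hyy.
    - exact Hy.
    - assert (Rabs (x-x) = 0) by (rewrite Rminus_diag; apply Rabs_R0). nra. }
  assert (H2 : Rabs (f x c) <= Rabs (f a c) + INR n).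
  { apply (chain1 (fun t => f t c) a b del Hdp).
    - intros x1 x2 Hx1 Hx2 Hxx. apply (Hd x2 c x1 c Hx2 (conj (Rle_refl c) hcd) Hx1 (conj (Rle_refl c) hcd)).
      exact Hxx. rewrite Rminus_diag, Rabs_R0. apply cond_pos.
    - exact Hx.
    - nra. }
  lra.
Qed.
Lemma tube U t0 c d : open2 U -> c <= d -> (forall r, c <= r <= d -> U t0 r) ->
  exists del, 0 < del /\ forall t r, Rabs (t - t0) < del -> c - del < r < d + del -> U t r.
Proof.
  intros HO hcd HU.
  assert (H : forall r, exists e, 0 < e /\ (c <= r <= d -> forall t' r', Rabs (t' - t0) < e -> Rabs (r' - r) < e -> U t' r')).
  { intros r. destruct (classic (c <= r <= d)) as [h|h].
    - destruct (HO t0 r (HU r h)) as [e [ep He]]. exists e. split; auto.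
    - exists 1. split. lra. intros h'; contradiction. }
  set (f := fun r => proj1_sig (constructive_indefinite_description _ (H r))).
  assert (Hf : forall r, 0 < f r /\ (c <= r <= d -> forall t' r', Rabs (t' - t0) < f r -> Rabs (r' - r) < f r -> U t' r')).
  { intros r. unfold f. destruct (constructive_indefinite_description _ (H r)) as [e He]. exact He. }
  assert (hp : forall r, 0 < f r / 2) by (intros r; destruct (Hf r); lra).
  destruct (compactness_value_1d c d (fun r => mkposreal _ (hp r))) as [dd Hdd]. simpl in Hdd.
  exists dd. split. apply cond_pos. intros t r Ht Hr.
  set (x := Rmax c (Rmin r d)).
  assert (Hx : c <= x <= d).
  { unfold x. split. apply Rmax_l. apply Rmax_lub. lra. apply Rmin_r. }
  assert (Hrx : Rabs (r - x) < dd).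
  { assert (0 < dd) by apply cond_pos. unfold x.
    destruct (Rle_dec r d) as [h1|h1].
    - rewrite Rmin_left by lra. destruct (Rle_dec c r) as [h2|h2].
      + rewrite Rmax_right by lra. rewrite Rminus_diag, Rabs_R0. lra.
      + rewrite Rmax_left by lra. apply Rabs_def1; lra.
    - rewrite Rmin_right by lra. rewrite Rmax_right by lra. apply Rabs_def1; lra. }
  specialize (Hdd x Hx). apply NNPP. intros HN. apply Hdd. intros [s [Hs [Hxs Hds]]].
  apply HN. destruct (Hf s) as [fs Hbox]. apply (Hbox Hs).
  - lra.
  - assert (Rabs (r - s) <= Rabs (r - x) + Rabs (x - s)).
    { replace (r - s) with ((r - x) + (x - s)) by ring. apply Rabs_triang. }
    lra.
Qed.
Lemma cont_of_eps (g : R->R) x : (forall eps, 0<eps -> exists d, 0<d /\ forall y, Rabs (y-x) < d -> Rabs (g y - g x) < eps) -> continuous g x.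
Proof. intros H. apply filterlim_locally. intros eps. destruct (H eps (cond_pos eps)) as [d [dp Hd]]. exists (mkposreal d dp). intros y Hy. apply Hd. exact Hy. Qed.
Lemma c2d_1 f x y : continuity_2d_pt f x y -> continuous (fun z => f z y) x.
Proof. intros H. apply cont_of_eps. intros eps ep. destruct (H (mkposreal eps ep)) as [d Hd].
 exists d. split. apply cond_pos. intros z Hz. apply Hd. exact Hz. rewrite Rminus_diag, Rabs_R0. apply cond_pos. Qed.
Lemma c2d_2 f x y : continuity_2d_pt f x y -> continuous (fun z => f x z) y.
Proof. intros H. apply cont_of_eps. intros eps ep. destruct (H (mkposreal eps ep)) as [d Hd].
 exists d. split. apply cond_pos. intros z Hz. apply Hd. rewrite Rminus_diag, Rabs_R0. apply cond_pos. exact Hz. Qed.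

Ltac c2 := repeat first [ apply continuity_2d_pt_plus | apply continuity_2d_pt_opp | apply continuity_2d_pt_minus | apply continuity_2d_pt_mult | apply continuity_2d_pt_const | apply continuity_2d_pt_id1 | apply continuity_2d_pt_id2 | apply (continuity_1d_2d_pt_comp sin); [apply continuity_sin|] | apply (continuity_1d_2d_pt_comp cos); [apply continuity_cos|] | (apply continuity_2d_pt_inv; [| first [assumption | cbv beta; lra]]) | assumption ].

Record Hyp (a T0 : R) (u ft fr ftt ftr frt frr : R -> R -> R) (U : R -> R -> Prop) : Prop := {
  h_a : 0 < a; h_T0 : 0 < T0; h_open : open2 U; h_Om : forall t r, in_Omega T0 t r -> U t r;
  c_u : cont2_on U u; c_ft : cont2_on U ft; c_fr : cont2_on U fr; c_ftt : cont2_on U ftt;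
  c_ftr : cont2_on U ftr; c_frt : cont2_on U frt; c_frr : cont2_on U frr;
  d_ut : dt_on U u ft; d_ur : dr_on U u fr; d_ftt : dt_on U ft ftt; d_ftr : dr_on U ft ftr;
  d_frt : dt_on U fr frt; d_frr : dr_on U fr frr;
  h_schw : forall t r, U t r -> ftr t r = frt t r;
  h_eq : forall t r, in_Omega T0 t r -> 0 < r -> skyrme_eq a u ft fr ftt frr t r;
  h_bd : forall t, 0 < t <= T0 -> u t 0 = 0 }.

Definition ed a (u ft fr : R -> R -> R) t r :=
  (r + a*a*sin (u t r)*sin (u t r)* /r) * (ft t r*ft t r + fr t r*fr t r) * /2 + sin (u t r)*sin (u t r)* /2 * /r.
Definition et a (u ft fr ftt frt : R -> R -> R) t r :=
  (a*a*(2*sin (u t r)*cos (u t r)*ft t r) * /r) * (ft t r*ft t r + fr t r*fr t r) * /2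
  + (r + a*a*sin (u t r)*sin (u t r)* /r) * (ft t r*ftt t r + fr t r*frt t r)
  + sin (u t r)*cos (u t r)*ft t r * /r.
Definition flux a (u ft fr : R -> R -> R) t r := (r + a*a*sin (u t r)*sin (u t r)* /r) * ft t r * fr t r.
Definition fluxr a (u ft fr ftr frr : R -> R -> R) t r :=
  (1 + a*a*(2*sin (u t r)*cos (u t r)*fr t r) * /r - a*a*sin (u t r)*sin (u t r)* /r * /r) * ft t r * fr t r
  + (r + a*a*sin (u t r)*sin (u t r)* /r) * (ftr t r * fr t r + ft t r * frr t r).


Lemma dT (U : R -> R -> Prop) f g t r : dt_on U f g -> U t r -> is_derive (fun z => f z r) t (g t r).
Proof. intros H Hu. apply is_derive_Reals. apply H. exact Hu. Qed.
Lemma dR (U : R -> R -> Prop) f g t r : dr_on U f g -> U t r -> is_derive (fun z => f t z) r (g t r).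
Proof. intros H Hu. apply is_derive_Reals. apply H. exact Hu. Qed.
Lemma G1 a T0 u ft fr ftt ftr frt frr U t r : Hyp a T0 u ft fr ftt ftr frt frr U -> U t r -> r <> 0 ->
  is_derive (fun z => ed a u ft fr z r) t (et a u ft fr ftt frt t r).
Proof.
  intros H Hu Hr.
  pose proof (dT _ _ _ t r (d_ut _ _ _ _ _ _ _ _ _ _ H) Hu) as D1.
  pose proof (dT _ _ _ t r (d_ftt _ _ _ _ _ _ _ _ _ _ H) Hu) as D2.
  pose proof (dT _ _ _ t r (d_frt _ _ _ _ _ _ _ _ _ _ H) Hu) as D3.
  unfold ed. auto_derive.
  - repeat split; eexists; eassumption.
  - rewrite (is_derive_unique (fun x : R => u x r) t _ D1), (is_derive_unique (fun x : R => ft x r) t _ D2), (is_derive_unique (fun x : R => fr x r) t _ D3).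
    unfold et. field. exact Hr.
Qed.

Lemma G4 a T0 u ft fr ftt ftr frt frr U t r : Hyp a T0 u ft fr ftt ftr frt frr U -> U t r -> r <> 0 ->
  is_derive (fun z => flux a u ft fr t z) r (fluxr a u ft fr ftr frr t r).
Proof.
  intros H Hu Hr.
  pose proof (dR _ _ _ t r (d_ur _ _ _ _ _ _ _ _ _ _ H) Hu) as D1.
  pose proof (dR _ _ _ t r (d_ftr _ _ _ _ _ _ _ _ _ _ H) Hu) as D2.
  pose proof (dR _ _ _ t r (d_frr _ _ _ _ _ _ _ _ _ _ H) Hu) as D3.
  unfold flux. auto_derive.
  - repeat split; try (eexists; eassumption); try assumption.
  - rewrite (is_derive_unique (fun x : R => u t x) r _ D1), (is_derive_unique (fun x : R => ft t x) r _ D2), (is_derive_unique (fun x : R => fr t x) r _ D3).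
    unfold fluxr. field. exact Hr.
Qed.

Lemma G7 a T0 u ft fr ftt ftr frt frr U t r : Hyp a T0 u ft fr ftt ftr frt frr U -> U t r ->
  is_derive (fun z => sin (u t z)) r (cos (u t r) * fr t r).
Proof.
  intros H Hu.
  pose proof (dR _ _ _ t r (d_ur _ _ _ _ _ _ _ _ _ _ H) Hu) as D1.
  auto_derive. exists (fr t r); exact D1.
  - rewrite (is_derive_unique (fun x : R => u t x) r _ D1). ring.
Qed.

Lemma G6 a T0 u ft fr ftt ftr frt frr U t r : Hyp a T0 u ft fr ftt ftr frt frr U -> in_Omega T0 t r -> 0 < r ->
  et a u ft fr ftt frt t r = fluxr a u ft fr ftr frr t r.
Proof.
  intros H Ho Hr.
  pose proof (h_eq _ _ _ _ _ _ _ _ _ _ H t r Ho Hr) as E.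
  unfold et, fluxr.
  rewrite (h_schw _ _ _ _ _ _ _ _ _ _ H t r (h_Om _ _ _ _ _ _ _ _ _ _ H t r Ho)).
  unfold skyrme_eq in E. rewrite sin_2a in E.
  set (s := sin (u t r)) in *. set (c := cos (u t r)) in *.
  fold s c.
  assert (Hid : (a*a*(2*s*c*ft t r) * /r) * (ft t r*ft t r + fr t r*fr t r) * /2
  + (r + a*a*s*s* /r) * (ft t r*ftt t r + fr t r*frt t r)
  + s*c*ft t r * /r - ((1 + a*a*(2*s*c*fr t r) * /r - a*a*s*s* /r * /r) * ft t r * fr t r
  + (r + a*a*s*s* /r) * (frt t r * fr t r + ft t r * frr t r)) =
   r * ft t r * ((1 + a ^ 2 * s ^ 2 / r ^ 2) * (ftt t r - frr t r) -
      (1 - a ^ 2 * s ^ 2 / r ^ 2) * (fr t r / r) +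
      2 * s * c / (2 * r ^ 2) * (a ^ 2 * (ft t r ^ 2 - fr t r ^ 2) + 1))).
  { field. lra. }
  rewrite E, Rmult_0_r in Hid. lra.
Qed.

Lemma c2U U f t r : cont2_on U f -> U t r -> continuity_2d_pt f t r.
Proof. intros; apply (cont2_2d U); assumption. Qed.

Ltac getc H Hu :=
  pose proof (c2U _ _ _ _ (c_u _ _ _ _ _ _ _ _ _ _ H) Hu);
  pose proof (c2U _ _ _ _ (c_ft _ _ _ _ _ _ _ _ _ _ H) Hu);
  pose proof (c2U _ _ _ _ (c_fr _ _ _ _ _ _ _ _ _ _ H) Hu);
  pose proof (c2U _ _ _ _ (c_ftt _ _ _ _ _ _ _ _ _ _ H) Hu);
  pose proof (c2U _ _ _ _ (c_ftr _ _ _ _ _ _ _ _ _ _ H) Hu);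
  pose proof (c2U _ _ _ _ (c_frt _ _ _ _ _ _ _ _ _ _ H) Hu);
  pose proof (c2U _ _ _ _ (c_frr _ _ _ _ _ _ _ _ _ _ H) Hu).

Lemma G3 a T0 u ft fr ftt ftr frt frr U t r : Hyp a T0 u ft fr ftt ftr frt frr U -> U t r -> r <> 0 ->
  continuity_2d_pt (ed a u ft fr) t r.
Proof. intros H Hu Hr. getc H Hu. unfold ed. c2. Qed.
Lemma G2 a T0 u ft fr ftt ftr frt frr U t r : Hyp a T0 u ft fr ftt ftr frt frr U -> U t r -> r <> 0 ->
  continuity_2d_pt (et a u ft fr ftt frt) t r.
Proof. intros H Hu Hr. getc H Hu. unfold et. c2. Qed.
Lemma G5 a T0 u ft fr ftt ftr frt frr U t r : Hyp a T0 u ft fr ftt ftr frt frr U -> U t r -> r <> 0 ->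
  continuity_2d_pt (fluxr a u ft fr ftr frr) t r.
Proof. intros H Hu Hr. getc H Hu. unfold fluxr. c2. Qed.
Lemma G8 a T0 u ft fr ftt ftr frt frr U t r : Hyp a T0 u ft fr ftt ftr frt frr U -> U t r -> r <> 0 ->
  continuity_2d_pt (flux a u ft fr) t r.
Proof. intros H Hu Hr. getc H Hu. unfold flux. c2. Qed.

Lemma G9 a T0 u ft fr ftt ftr frt frr U t r : Hyp a T0 u ft fr ftt ftr frt frr U -> U t r -> r <> 0 ->
  continuity_2d_pt (fun x y => Derive (fun z => ed a u ft fr z y) x) t r.
Proof.
  intros H Hu Hr.
  apply continuity_2d_pt_ext_loc with (f := et a u ft fr ftt frt).
  - destruct (h_open _ _ _ _ _ _ _ _ _ _ H t r Hu) as [e [ep He]].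
    assert (hp : 0 < Rmin e (Rabs r)) by (apply Rmin_pos; [lra| apply Rabs_pos_lt; exact Hr]).
    exists (mkposreal _ hp). simpl. intros x y Hx Hy.
    assert (Hx' : Rabs (x - t) < e) by (eapply Rlt_le_trans; [exact Hx| apply Rmin_l]).
    assert (Hy' : Rabs (y - r) < e) by (eapply Rlt_le_trans; [exact Hy| apply Rmin_l]).
    assert (Hy0 : y <> 0).
    { intros ->. assert (Rabs (0 - r) < Rabs r) by (eapply Rlt_le_trans; [exact Hy| apply Rmin_r]).
      rewrite Rminus_0_l, Rabs_Ropp in H0. lra. }
    symmetry. apply is_derive_unique. apply (G1 a T0 u ft fr ftt ftr frt frr U); auto.
  - apply (G2 a T0 u ft fr ftt ftr frt frr U); auto.
Qed.

Lemma cpt_of_c f x : continuous f x -> continuity_pt f x.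
Proof. intros H. apply continuity_pt_filterlim. exact H. Qed.

Lemma lip (g dg : R -> R) e M : 0 <= e -> (forall x, 0 <= x <= e -> is_derive g x (dg x)) ->
  (forall x, 0 <= x <= e -> Rabs (dg x) <= M) -> Rabs (g e - g 0) <= M * e.
Proof.
  intros he Hd Hb.
  destruct (MVT_gen g 0 e dg) as [c [Hc Heq]].
  - intros x Hx. rewrite Rmin_left, Rmax_right in Hx by lra. apply Hd. lra.
  - intros x Hx. rewrite Rmin_left, Rmax_right in Hx by lra. apply cpt_of_c.
    apply (@ex_derive_continuous R_AbsRing R_NormedModule). eexists. apply Hd. lra.
  - rewrite Rmin_left, Rmax_right in Hc by lra. rewrite Heq, Rminus_0_r, Rabs_mult, (Rabs_right e) by lra.
    apply Rmult_le_compat_r. lra. apply Hb. exact Hc.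
Qed.

Lemma sinlip a T0 u ft fr ftt ftr frt frr U tau e M : Hyp a T0 u ft fr ftt ftr frt frr U ->
  0 < tau <= T0 -> 0 <= e <= tau -> (forall y, 0 <= y <= e -> Rabs (fr tau y) <= M) ->
  Rabs (sin (u tau e)) <= M * e.
Proof.
  intros H Ht He Hb.
  assert (E0 : sin (u tau 0) = 0) by (rewrite (h_bd _ _ _ _ _ _ _ _ _ _ H tau Ht); apply sin_0).
  replace (sin (u tau e)) with (sin (u tau e) - sin (u tau 0)) by (rewrite E0; ring).
  apply (lip (fun z => sin (u tau z)) (fun z => cos (u tau z) * fr tau z)).
  - lra.
  - intros x Hx. apply (G7 a T0 u ft fr ftt ftr frt frr U); auto. apply (h_Om _ _ _ _ _ _ _ _ _ _ H). split; lra.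
  - intros x Hx. rewrite Rabs_mult. specialize (Hb x Hx).
    assert (Rabs (cos (u tau x)) <= 1) by (apply Rabs_le; apply COS_bound).
    assert (0 <= Rabs (fr tau x)) by apply Rabs_pos.
    assert (0 <= Rabs (cos (u tau x))) by apply Rabs_pos. nra.
Qed.

Lemma ball_R (x y d : R) : ball x d y -> Rabs (y - x) < d.
Proof. intros h. exact h. Qed.

Lemma Ederiv a T0 u ft fr ftt ftr frt frr U e tau : Hyp a T0 u ft fr ftt ftr frt frr U ->
  0 < e < tau -> tau <= T0 ->
  is_derive (fun x => RInt (fun r => ed a u ft fr x r) e x) tau
    (flux a u ft fr tau tau - flux a u ft fr tau e + ed a u ft fr tau tau).
Proof.
  intros H He Ht.
  destruct (tube U tau e tau (h_open _ _ _ _ _ _ _ _ _ _ H) ltac:(lra)) as [d0 [d0p Hd0]].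
  { intros r Hr. apply (h_Om _ _ _ _ _ _ _ _ _ _ H). split; lra. }
  set (d := Rmin d0 (e/2)).
  assert (dp : 0 < d) by (apply Rmin_pos; lra).
  assert (dle : d <= d0) by apply Rmin_l. assert (dle2 : d <= e/2) by apply Rmin_r.
  assert (HU : forall x r, Rabs (x - tau) < d -> e - d < r < tau + d -> U x r /\ r <> 0).
  { intros x r Hx Hr. split. apply Hd0; lra. lra. }
  set (dh := mkposreal (d/2) ltac:(lra)).
  assert (Hex : forall y c1 c2, Rabs (y - tau) < d -> e - d < c1 -> c2 < tau + d -> c1 <= c2 ->
     ex_RInt (fun t => ed a u ft fr y t) c1 c2).
  { intros y c1 c2 Hy Hc1 Hc2 Hc. apply (@ex_RInt_continuous R_CompleteNormedModule). intros z Hz.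
    rewrite Rmin_left, Rmax_right in Hz by lra. destruct (HU y z Hy ltac:(lra)) as [HU1 HU2].
    apply (c2d_2 (ed a u ft fr)). apply (G3 a T0 u ft fr ftt ftr frt frr U); auto. }
  assert (HD : forall x r, Rabs (x - tau) < d -> e - d < r < tau + d ->
     continuity_2d_pt (fun u0 v => Derive (fun z => ed a u ft fr z v) u0) x r).
  { intros x r Hx Hr. destruct (HU x r Hx Hr). apply (G9 a T0 u ft fr ftt ftr frt frr U); auto. }
  pose proof (is_derive_RInt_param_bound_comp (ed a u ft fr) (fun _ => e) (fun x => x) tau 0 1) as P.
  simpl in P. assert (Hv : is_derive (fun x => RInt (fun t => ed a u ft fr x t) e x) tau
    (RInt (fun t => Derive (fun u0 => ed a u ft fr u0 t) tau) e tau + - ed a u ft fr tau e * 0 + ed a u ft fr tau tau * 1)).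
  { apply P; clear P.
    - exists (mkposreal d dp). intros y Hy. apply ball_R in Hy. apply Hex; simpl in *; lra.
    - exists dh. exists (mkposreal d dp). intros y Hy. apply ball_R in Hy. apply Hex; simpl in *; lra.
    - exists dh. exists (mkposreal d dp). intros y Hy. apply ball_R in Hy. apply Hex; simpl in *; lra.
    - apply is_derive_Reals; apply derivable_pt_lim_const.
    - apply is_derive_Reals; apply derivable_pt_lim_id.
    - exists dh. exists (mkposreal d dp). intros y Hy t Ht2. apply ball_R in Hy. simpl in *.
      rewrite Rmin_left, Rmax_right in Ht2 by lra. destruct (HU y t ltac:(lra) ltac:(lra)).
      eexists. apply (G1 a T0 u ft fr ftt ftr frt frr U); auto.
    - intros t Ht2. rewrite Rmin_left, Rmax_right in Ht2 by lra. apply HD. rewrite Rminus_diag, Rabs_R0; lra. lra.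
    - exists dh. intros x' t Hx Ht2. simpl in *. apply HD; [lra| split; apply Rabs_lt_between' in Ht2; lra].
    - exists dh. intros x' t Hx Ht2. simpl in *. apply HD; [lra| split; apply Rabs_lt_between' in Ht2; lra].
    - destruct (HU tau e ltac:(rewrite Rminus_diag, Rabs_R0; lra) ltac:(lra)).
      apply cpt_of_c. apply (c2d_2 (ed a u ft fr)). apply (G3 a T0 u ft fr ftt ftr frt frr U); auto.
    - destruct (HU tau tau ltac:(rewrite Rminus_diag, Rabs_R0; lra) ltac:(lra)).
      apply cpt_of_c. apply (c2d_2 (ed a u ft fr)). apply (G3 a T0 u ft fr ftt ftr frt frr U); auto. }
  assert (HUo : forall r, e <= r <= tau -> U tau r /\ in_Omega T0 tau r).
  { intros r Hr. assert (in_Omega T0 tau r) by (split; lra). split; auto. apply (h_Om _ _ _ _ _ _ _ _ _ _ H); auto. }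
  assert (E1 : RInt (fun t => Derive (fun u0 => ed a u ft fr u0 t) tau) e tau = RInt (fluxr a u ft fr ftr frr tau) e tau).
  { apply RInt_ext. intros x Hx. rewrite Rmin_left, Rmax_right in Hx by lra.
    destruct (HUo x ltac:(lra)) as [HU1 HU2].
    rewrite <- (G6 a T0 u ft fr ftt ftr frt frr U tau x H HU2 ltac:(lra)).
    apply is_derive_unique. apply (G1 a T0 u ft fr ftt ftr frt frr U); auto; lra. }
  assert (E2 : RInt (fluxr a u ft fr ftr frr tau) e tau = flux a u ft fr tau tau - flux a u ft fr tau e).
  { apply is_RInt_unique.
    apply (@is_RInt_derive R_CompleteNormedModule (flux a u ft fr tau)).
    - intros x Hx. rewrite Rmin_left, Rmax_right in Hx by lra. destruct (HUo x Hx) as [HU1 HU2].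
      apply (G4 a T0 u ft fr ftt ftr frt frr U); auto; lra.
    - intros x Hx. rewrite Rmin_left, Rmax_right in Hx by lra. destruct (HUo x Hx) as [HU1 HU2].
      apply (c2d_2 (fluxr a u ft fr ftr frr)). apply (G5 a T0 u ft fr ftt ftr frt frr U); auto; lra. }
  rewrite E1, E2 in Hv. replace (flux a u ft fr tau tau - flux a u ft fr tau e + ed a u ft fr tau tau)
    with (flux a u ft fr tau tau - flux a u ft fr tau e + - ed a u ft fr tau e * 0 + ed a u ft fr tau tau * 1) by ring.
  exact Hv.
Qed.

Lemma fluxTT a u ft fr x : 0 < x -> 0 <= flux a u ft fr x x + ed a u ft fr x x.
Proof.
  intros hx. unfold flux, ed. set (s := sin (u x x)). set (p := ft x x). set (q := fr x x).
  assert (0 < /x) by (apply Rinv_0_lt_compat; lra).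
  assert (HP : 0 <= x + a*a*s*s*/x).
  { assert (0 <= a*a*s*s) by (replace (a*a*s*s) with ((a*s)*(a*s)) by ring; apply Rle_0_sqr). nra. }
  assert (0 <= s*s) by apply Rle_0_sqr.
  assert (0 <= (x + a*a*s*s*/x) * ((p+q)*(p+q))) by (apply Rmult_le_pos; [lra| apply Rle_0_sqr]).
  nra.
Qed.

Lemma flux_bound a T0 u ft fr ftt ftr frt frr U x e M : Hyp a T0 u ft fr ftt ftr frt frr U ->
  0 < x <= T0 -> 0 < e <= x -> (forall y, 0 <= y <= e -> Rabs (fr x y) <= M) -> Rabs (ft x e) <= M ->
  Rabs (flux a u ft fr x e) <= e*(1+a*a*M*M)*M*M.
Proof.
  intros H Hx He Hb Hft.
  pose proof (sinlip a T0 u ft fr ftt ftr frt frr U x e M H Hx ltac:(lra) Hb) as Hs.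
  pose proof (Hb e ltac:(lra)) as Hfr.
  assert (HM : 0 <= M) by (eapply Rle_trans; [apply Rabs_pos | exact Hft]).
  unfold flux. set (s := sin (u x e)) in *.
  assert (Hs2 : s*s <= (M*e)*(M*e)).
  { assert (E : Rabs s * Rabs s = s*s) by (rewrite <- Rabs_mult; apply Rabs_right; apply Rle_ge, Rle_0_sqr).
    rewrite <- E. apply Rmult_le_compat; auto using Rabs_pos. }
  assert (Hie : 0 < /e) by (apply Rinv_0_lt_compat; lra).
  assert (Hq : s*s*/e <= M*M*e).
  { replace (M*M*e) with ((M*e)*(M*e)*/e) by (field; lra). apply Rmult_le_compat_r; lra. }
  assert (Hq0 : 0 <= s*s*/e) by (apply Rmult_le_pos; [apply Rle_0_sqr| lra]).
  set (P := e + a*a*s*s*/e).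
  assert (HP0 : 0 <= P) by (unfold P; assert (0 <= a*a) by apply Rle_0_sqr; replace (a*a*s*s*/e) with ((a*a)*(s*s*/e)) by ring; nra).
  assert (HP1 : P <= e*(1+a*a*M*M)) by (unfold P; assert (0 <= a*a) by apply Rle_0_sqr; replace (a*a*s*s*/e) with ((a*a)*(s*s*/e)) by ring; nra).
  rewrite !Rabs_mult, (Rabs_right P) by lra.
  assert (0 <= Rabs (ft x e)) by apply Rabs_pos. assert (0 <= Rabs (fr x e)) by apply Rabs_pos.
  assert (P * Rabs (ft x e) <= e*(1+a*a*M*M) * M) by (apply Rmult_le_compat; lra).
  assert (0 <= P * Rabs (ft x e)) by (apply Rmult_le_pos; lra).
  apply Rmult_le_compat; lra.
Qed.

Lemma Emono a T0 u ft fr ftt ftr frt frr U e T M : Hyp a T0 u ft fr ftt ftr frt frr U ->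
  0 < e < T -> T <= T0 ->
  (forall x y, T <= x <= T0 -> 0 <= y <= T -> Rabs (ft x y) <= M /\ Rabs (fr x y) <= M) ->
  RInt (ed a u ft fr T) e T <= RInt (ed a u ft fr T0) e T0 + (T0 - T) * (e*(1+a*a*M*M)*M*M).
Proof.
  intros H He HT HM.
  set (E := fun x => RInt (fun r => ed a u ft fr x r) e x).
  set (D := fun x => flux a u ft fr x x - flux a u ft fr x e + ed a u ft fr x x).
  destruct (MVT_gen E T T0 D) as [c [Hc Heq]].
  - intros x Hx. rewrite Rmin_left, Rmax_right in Hx by lra. apply (Ederiv a T0 u ft fr ftt ftr frt frr U); auto; lra.
  - intros x Hx. rewrite Rmin_left, Rmax_right in Hx by lra. apply cpt_of_c.
    apply (@ex_derive_continuous R_AbsRing R_NormedModule). eexists.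
    apply (Ederiv a T0 u ft fr ftt ftr frt frr U); auto; lra.
  - rewrite Rmin_left, Rmax_right in Hc by lra.
    assert (H1 := fluxTT a u ft fr c ltac:(lra)).
    assert (H2 : Rabs (flux a u ft fr c e) <= e*(1+a*a*M*M)*M*M).
    { apply (flux_bound a T0 u ft fr ftt ftr frt frr U); auto; try lra.
      - intros y Hy. apply (HM c y); lra.
      - apply (HM c e); lra. }
    assert (D c >= - (e*(1+a*a*M*M)*M*M)).
    { unfold D. assert (h := Rle_abs (flux a u ft fr c e)). cbv beta. set (K := e * (1 + a * a * M * M) * M * M) in *. lra. }
    unfold E in Heq. change (RInt (ed a u ft fr T) e T) with (RInt (fun r => ed a u ft fr T r) e T).
    change (RInt (ed a u ft fr T0) e T0) with (RInt (fun r => ed a u ft fr T0 r) e T0).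
    nra.
Qed.

Lemma sq_div s M x : 0 < x -> Rabs s <= M * x -> 0 <= s*s*/x <= M*M*x.
Proof.
  intros hx hs. assert (Hie : 0 < /x) by (apply Rinv_0_lt_compat; lra).
  assert (Hs2 : s*s <= (M*x)*(M*x)).
  { assert (E : Rabs s * Rabs s = s*s) by (rewrite <- Rabs_mult; apply Rabs_right; apply Rle_ge, Rle_0_sqr).
    rewrite <- E. apply Rmult_le_compat; auto using Rabs_pos. }
  split. apply Rmult_le_pos; [apply Rle_0_sqr| lra].
  replace (M*M*x) with ((M*x)*(M*x)*/x) by (field; lra). apply Rmult_le_compat_r; lra.
Qed.

Lemma ed_nonneg a u ft fr t x : 0 < x -> 0 <= ed a u ft fr t x.
Proof.
  intros hx. unfold ed. assert (0 < /x) by (apply Rinv_0_lt_compat; lra).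
  set (s := sin (u t x)).
  assert (0 <= s*s) by apply Rle_0_sqr. assert (0 <= a*a) by apply Rle_0_sqr.
  assert (0 <= a*a*s*s*/x) by (replace (a*a*s*s*/x) with ((a*a)*(s*s)*/x) by ring; apply Rmult_le_pos; [apply Rmult_le_pos|]; lra).
  assert (0 <= ft t x*ft t x + fr t x*fr t x) by (assert (0 <= ft t x * ft t x) by apply Rle_0_sqr; assert (0 <= fr t x * fr t x) by apply Rle_0_sqr; lra).
  assert (0 <= s*s*/2*/x) by (apply Rmult_le_pos; [apply Rmult_le_pos; lra|lra]).
  assert (0 <= (x + a*a*s*s*/x) * (ft t x*ft t x + fr t x*fr t x)) by (apply Rmult_le_pos; lra).
  nra.
Qed.

Lemma Wder_nonneg a u ft fr t x r : 0 < a -> 0 < x -> 0 < r ->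
  0 <= r*(2/(a*a))*ed a u ft fr t x + x/r - 2*sin (u t x)*cos (u t x)*fr t x.
Proof.
  intros ha hx hr. unfold ed. set (s := sin (u t x)). set (cs := cos (u t x)). set (p := ft t x). set (f := fr t x).
  assert (0 < /x) by (apply Rinv_0_lt_compat; lra).
  assert (0 <= s*s) by apply Rle_0_sqr.
  assert (h0 : 0 <= x*(p*p) + s*s*/2*/x*2) by (assert (0 <= p*p) by apply Rle_0_sqr; assert (0 <= s*s*/x) by (apply Rmult_le_pos; lra); nra).
  assert (h1 : r*(2/(a*a))*((x + a*a*s*s*/x)*(p*p+f*f)*/2 + s*s*/2*/x)
     = r*s*s*f*f/x + r/(a*a)*(x*(p*p) + x*(f*f) + a*a*s*s*/x*(p*p) + s*s*/x)).
  { field. lra. }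
  assert (h2 : 0 <= r/(a*a)*(x*(p*p) + x*(f*f) + a*a*s*s*/x*(p*p) + s*s*/x)).
  { apply Rmult_le_pos. apply Rmult_le_pos. lra. left; apply Rinv_0_lt_compat; nra.
    assert (0 <= p*p) by apply Rle_0_sqr. assert (0 <= f*f) by apply Rle_0_sqr.
    assert (0 <= s*s*/x) by (apply Rmult_le_pos; lra).
    assert (0 <= a*a*s*s*/x*(p*p)) by (replace (a*a*s*s*/x*(p*p)) with ((a*a)*(s*s*/x)*(p*p)) by ring; apply Rmult_le_pos; [apply Rmult_le_pos|]; nra).
    nra. }
  assert (hc : cs*cs <= 1) by (pose proof (sin2_cos2 (u t x)); unfold Rsqr in *; fold s cs in H1; nra).
  assert (h3 : r*s*s*f*f/x + x/r - 2*s*cs*f = ((r*(s*f) - x*cs)*(r*(s*f) - x*cs) + x*x*(1 - cs*cs))/(r*x)).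
  { field. lra. }
  assert (h4 : 0 <= ((r*(s*f) - x*cs)*(r*(s*f) - x*cs) + x*x*(1 - cs*cs))/(r*x)).
  { apply Rmult_le_pos. assert (0 <= (r*(s*f) - x*cs)*(r*(s*f) - x*cs)) by apply Rle_0_sqr. assert (0 <= x*x) by apply Rle_0_sqr. nra.
    left. apply Rinv_0_lt_compat. nra. }
  unfold Rdiv in *. nra.
Qed.

Lemma exRInt_ed a T0 u ft fr ftt ftr frt frr U T c1 c2 : Hyp a T0 u ft fr ftt ftr frt frr U ->
  0 < T <= T0 -> 0 < c1 <= c2 -> c2 <= T -> ex_RInt (ed a u ft fr T) c1 c2.
Proof.
  intros H HT Hc Hc2. apply (@ex_RInt_continuous R_CompleteNormedModule). intros z Hz.
  rewrite Rmin_left, Rmax_right in Hz by lra.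
  apply (c2d_2 (ed a u ft fr)). apply (G3 a T0 u ft fr ftt ftr frt frr U); auto; try lra.
  apply (h_Om _ _ _ _ _ _ _ _ _ _ H). split; lra.
Qed.

Lemma sinsq_step a T0 u ft fr ftt ftr frt frr U T e r : Hyp a T0 u ft fr ftt ftr frt frr U ->
  0 < T <= T0 -> 0 < e < r -> r <= T ->
  sin (u T r)*sin (u T r) <= sin (u T e)*sin (u T e) + r*(2/(a*a))*RInt (ed a u ft fr T) e r + r/2.
Proof.
  intros H HT He Hr.
  pose proof (h_a _ _ _ _ _ _ _ _ _ _ H) as ha.
  destruct (tube U T e T (h_open _ _ _ _ _ _ _ _ _ _ H) ltac:(lra)) as [d0 [d0p Hd0]].
  { intros x Hx. apply (h_Om _ _ _ _ _ _ _ _ _ _ H). split; lra. }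
  set (d := Rmin d0 (e/2)).
  assert (dp : 0 < d) by (apply Rmin_pos; lra).
  assert (dle : d <= d0) by apply Rmin_l. assert (dle2 : d <= e/2) by apply Rmin_r.
  assert (HU : forall x, e - d < x < T + d -> U T x /\ x <> 0).
  { intros x Hx. split. apply Hd0. rewrite Rminus_diag, Rabs_R0; lra. lra. lra. }
  set (W := fun x => r*(2/(a*a))*RInt (ed a u ft fr T) e x + x*x/(2*r) - sin (u T x)*sin (u T x)).
  set (W' := fun x => r*(2/(a*a))*ed a u ft fr T x + x/r - 2*sin (u T x)*cos (u T x)*fr T x).
  assert (HW : forall x, e <= x <= r -> is_derive W x (W' x)).
  { intros x Hx. destruct (HU x ltac:(lra)) as [HU1 HU2].
    assert (DI : is_derive (fun b => RInt (ed a u ft fr T) e b) x (ed a u ft fr T x)).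
    { apply (@is_derive_RInt R_CompleteNormedModule (ed a u ft fr T) (fun b => RInt (ed a u ft fr T) e b) e x).
      - exists (mkposreal d dp). intros b Hb. apply ball_R in Hb. simpl in Hb. apply Rabs_lt_between' in Hb.
        apply (@RInt_correct R_CompleteNormedModule).
        apply (@ex_RInt_continuous R_CompleteNormedModule). intros z Hz.
        assert (e - d < z < T + d).
        { split. eapply Rlt_le_trans; [|exact (proj1 Hz)]. apply Rmin_glb_lt; lra.
          eapply Rle_lt_trans; [exact (proj2 Hz)|]. apply Rmax_lub_lt; lra. }
        destruct (HU z H0). apply (c2d_2 (ed a u ft fr)). apply (G3 a T0 u ft fr ftt ftr frt frr U); auto.
      - apply (c2d_2 (ed a u ft fr)). apply (G3 a T0 u ft fr ftt ftr frt frr U); auto. }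
    pose proof (dR _ _ _ T x (d_ur _ _ _ _ _ _ _ _ _ _ H) HU1) as DU.
    unfold W, W'. auto_derive.
    - repeat split; try (eexists; eassumption).
      + apply (exRInt_ed a T0 u ft fr ftt ftr frt frr U); auto; lra.
      + exists (mkposreal d dp). intros y Hy. apply ball_R in Hy. simpl in Hy. apply Rabs_lt_between' in Hy.
        destruct (HU y ltac:(lra)). apply cpt_of_c. apply (c2d_2 (ed a u ft fr)). apply (G3 a T0 u ft fr ftt ftr frt frr U); auto.
    - rewrite (is_derive_unique (fun x0 : R => u T x0) x _ DU). field. lra. }
  destruct (MVT_gen W e r W') as [c [Hc Heq]].
  - intros x Hx. rewrite Rmin_left, Rmax_right in Hx by lra. apply HW. lra.
  - intros x Hx. rewrite Rmin_left, Rmax_right in Hx by lra. apply cpt_of_c.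
    apply (@ex_derive_continuous R_AbsRing R_NormedModule). eexists. apply HW. lra.
  - rewrite Rmin_left, Rmax_right in Hc by lra.
    assert (0 <= W' c) by (apply Wder_nonneg; lra).
    assert (W e <= W r) by nra.
    unfold W in H1. rewrite RInt_point in H1. unfold zero in H1; simpl in H1.
    assert (r * r / (2 * r) = r/2) by (field; lra).
    assert (0 <= e*e/(2*r)) by (apply Rmult_le_pos; [apply Rle_0_sqr| left; apply Rinv_0_lt_compat; lra]).
    nra.
Qed.

Lemma rect2 a T0 u ft fr ftt ftr frt frr U x1 x2 y1 y2 : Hyp a T0 u ft fr ftt ftr frt frr U ->
  x1 <= x2 -> y1 <= y2 -> (forall x y, x1 <= x <= x2 -> y1 <= y <= y2 -> U x y) ->
  exists M, 0 <= M /\ forall x y, x1 <= x <= x2 -> y1 <= y <= y2 -> Rabs (ft x y) <= M /\ Rabs (fr x y) <= M.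
Proof.
  intros H hx hy HU.
  destruct (rect_bound ft x1 x2 y1 y2 hx hy) as [M1 HM1].
  { intros x y Hx Hy. apply (c2U U); [apply (c_ft _ _ _ _ _ _ _ _ _ _ H)| auto]. }
  destruct (rect_bound fr x1 x2 y1 y2 hx hy) as [M2 HM2].
  { intros x y Hx Hy. apply (c2U U); [apply (c_fr _ _ _ _ _ _ _ _ _ _ H)| auto]. }
  exists (Rmax 0 (Rmax M1 M2)). split. apply Rmax_l.
  intros x y Hx Hy. split.
  - eapply Rle_trans. apply HM1; auto. eapply Rle_trans; [apply Rmax_l| apply Rmax_r].
  - eapply Rle_trans. apply HM2; auto. eapply Rle_trans; [apply Rmax_r| apply Rmax_r].
Qed.

Lemma lim0 x y r B : 0 < r -> 0 <= B -> (forall e, 0 < e < r -> x <= y + e*B) -> x <= y.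
Proof.
  intros hr hB H. destruct (Rle_dec x y) as [h|h]; auto. exfalso.
  set (e := Rmin (r/2) ((x - y)/(2*(B+1)))).
  assert (he : 0 < e) by (apply Rmin_pos; [lra| apply Rdiv_lt_0_compat; lra]).
  assert (he1 : e <= r/2) by apply Rmin_l.
  assert (he2 : e <= (x-y)/(2*(B+1))) by apply Rmin_r.
  specialize (H e ltac:(lra)).
  assert (e*B <= (x-y)/(2*(B+1))*B) by (apply Rmult_le_compat_r; lra).
  assert ((x-y)/(2*(B+1))*B < x - y).
  { replace ((x-y)/(2*(B+1))*B) with ((x-y)*(B/(2*(B+1)))) by (field; lra).
    assert (B/(2*(B+1)) < 1). { apply (Rmult_lt_reg_r (2*(B+1))). lra. unfold Rdiv. rewrite Rmult_assoc, Rinv_l by lra. lra. }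
    assert (0 <= B/(2*(B+1))) by (apply Rmult_le_pos; [lra| left; apply Rinv_0_lt_compat; lra]).
    nra. }
  lra.
Qed.

Lemma key a T0 u ft fr ftt ftr frt frr U : Hyp a T0 u ft fr ftt ftr frt frr U ->
  exists K, forall T r, 0 < T <= T0 -> 0 < r <= T -> sin (u T r) * sin (u T r) <= K * r.
Proof.
  intros H. pose proof (h_a _ _ _ _ _ _ _ _ _ _ H) as ha. pose proof (h_T0 _ _ _ _ _ _ _ _ _ _ H) as hT0.
  destruct (rect2 a T0 u ft fr ftt ftr frt frr U T0 T0 0 T0 H ltac:(lra) ltac:(lra)) as [M0 [HM0 HB0]].
  { intros x y Hx Hy. apply (h_Om _ _ _ _ _ _ _ _ _ _ H). split; lra. }
  set (C1 := T0*(1+a*a*M0*M0)*M0*M0 + M0*M0*T0/2).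
  assert (HC1 : forall x, 0 < x <= T0 -> ed a u ft fr T0 x <= C1).
  { intros x Hx. destruct (HB0 T0 x ltac:(lra) ltac:(lra)) as [h1 h2].
    assert (Hs : Rabs (sin (u T0 x)) <= M0 * x).
    { apply (sinlip a T0 u ft fr ftt ftr frt frr U); auto; try lra. intros y Hy. apply (HB0 T0 y); lra. }
    destruct (sq_div (sin (u T0 x)) M0 x ltac:(lra) Hs) as [q0 q1].
    unfold ed, C1. set (s := sin (u T0 x)) in *.
    assert (0 <= a*a) by apply Rle_0_sqr.
    assert (Hp : ft T0 x * ft T0 x <= M0*M0).
    { assert (E : Rabs (ft T0 x) * Rabs (ft T0 x) = ft T0 x * ft T0 x) by (rewrite <- Rabs_mult; apply Rabs_right; apply Rle_ge, Rle_0_sqr).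
      rewrite <- E. apply Rmult_le_compat; auto using Rabs_pos. }
    assert (Hq : fr T0 x * fr T0 x <= M0*M0).
    { assert (E : Rabs (fr T0 x) * Rabs (fr T0 x) = fr T0 x * fr T0 x) by (rewrite <- Rabs_mult; apply Rabs_right; apply Rle_ge, Rle_0_sqr).
      rewrite <- E. apply Rmult_le_compat; auto using Rabs_pos. }
    assert (0 <= ft T0 x * ft T0 x) by apply Rle_0_sqr. assert (0 <= fr T0 x * fr T0 x) by apply Rle_0_sqr.
    set (P := x + a*a*s*s*/x).
    assert (HP0 : 0 <= P).
    { unfold P; replace (a*a*s*s*/x) with ((a*a)*(s*s*/x)) by ring. assert (0 <= (a*a)*(s*s*/x)) by (apply Rmult_le_pos; lra). lra. }
    assert (HP1 : P <= T0*(1+a*a*M0*M0)).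
    { unfold P; replace (a*a*s*s*/x) with ((a*a)*(s*s*/x)) by ring.
      assert ((a*a)*(s*s*/x) <= (a*a)*(M0*M0*T0)).
      { apply Rmult_le_compat_l. lra. eapply Rle_trans. exact q1. apply Rmult_le_compat_l. apply Rle_0_sqr. lra. }
      assert (0 <= a*a*M0*M0) by (replace (a*a*M0*M0) with ((a*a)*(M0*M0)) by ring; apply Rmult_le_pos; [lra|apply Rle_0_sqr]).
      replace (T0*(1+a*a*M0*M0)) with (T0 + (a*a)*(M0*M0*T0)) by ring. lra. }
    assert (P*(ft T0 x * ft T0 x + fr T0 x * fr T0 x) <= T0*(1+a*a*M0*M0)*(2*(M0*M0))) by (apply Rmult_le_compat; lra).
    replace (s*s*/2*/x) with ((s*s*/x)/2) by (field; lra).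
    assert (M0*M0*x <= M0*M0*T0) by (apply Rmult_le_compat_l; [apply Rle_0_sqr| lra]).
    lra. }
  exists ((2/(a*a))*(C1*T0) + 1/2).
  intros T r HT Hr.
  destruct (rect2 a T0 u ft fr ftt ftr frt frr U T T0 0 T H ltac:(lra) ltac:(lra)) as [M [HM HB]].
  { intros x y Hx Hy. apply (h_Om _ _ _ _ _ _ _ _ _ _ H). split; lra. }
  assert (h2a : 0 < 2/(a*a)) by (apply Rdiv_lt_0_compat; nra).
  set (B := M*M*r + r*(2/(a*a))*((T0-T)*((1+a*a*M*M)*M*M))).
  assert (HBp : 0 <= B).
  { unfold B. assert (0 <= M*M) by apply Rle_0_sqr. assert (0 <= a*a*M*M) by (replace (a*a*M*M) with ((a*a)*(M*M)) by ring; apply Rmult_le_pos; apply Rle_0_sqr).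
    assert (0 <= (1+a*a*M*M)*M*M) by (replace ((1+a*a*M*M)*M*M) with ((1+a*a*M*M)*(M*M)) by ring; apply Rmult_le_pos; lra).
    assert (0 <= (T0-T)*((1+a*a*M*M)*M*M)) by (apply Rmult_le_pos; lra).
    assert (0 <= r*(2/(a*a))) by (apply Rmult_le_pos; lra).
    assert (0 <= r*(2/(a*a))*((T0-T)*((1+a*a*M*M)*M*M))) by (apply Rmult_le_pos; lra).
    assert (0 <= M*M*r) by (apply Rmult_le_pos; lra). lra. }
  apply (lim0 _ _ r B ltac:(lra) HBp). intros e He.
  pose proof (sinsq_step a T0 u ft fr ftt ftr frt frr U T e r H HT He ltac:(lra)) as S1.
  assert (I1 : RInt (ed a u ft fr T) e r <= RInt (ed a u ft fr T) e T).
  { rewrite <- (RInt_Chasles (V:=R_CompleteNormedModule) (ed a u ft fr T) e r T).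
    2: apply (exRInt_ed a T0 u ft fr ftt ftr frt frr U); auto; lra.
    2: apply (exRInt_ed a T0 u ft fr ftt ftr frt frr U); auto; lra.
    assert (0 <= RInt (ed a u ft fr T) r T).
    { apply RInt_ge_0. lra. apply (exRInt_ed a T0 u ft fr ftt ftr frt frr U); auto; lra.
      intros x Hx. apply ed_nonneg. lra. }
    unfold plus; simpl. lra. }
  pose proof (Emono a T0 u ft fr ftt ftr frt frr U e T M H ltac:(lra) ltac:(lra)) as I2.
  specialize (I2 (fun x y Hx Hy => HB x y Hx Hy)).
  assert (I3 : RInt (ed a u ft fr T0) e T0 <= C1*T0).
  { assert (RInt (ed a u ft fr T0) e T0 <= RInt (fun _ => C1) e T0).
    { apply RInt_le. lra. apply (exRInt_ed a T0 u ft fr ftt ftr frt frr U); auto; lra.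
      apply ex_RInt_const. intros x Hx. apply HC1. lra. }
    rewrite RInt_const in H0. unfold scal in H0; simpl in H0. unfold mult in H0; simpl in H0.
    assert (0 <= C1) by (eapply Rle_trans; [apply (ed_nonneg a u ft fr T0 T0); lra| apply HC1; lra]).
    nra. }
  assert (Hs : Rabs (sin (u T e)) <= M * e).
  { apply (sinlip a T0 u ft fr ftt ftr frt frr U); auto; try lra. intros y Hy. apply (HB T y); lra. }
  destruct (sq_div (sin (u T e)) M e ltac:(lra) Hs) as [q0 q1].
  assert (Hse : sin (u T e) * sin (u T e) <= M*M*e*e).
  { assert (sin (u T e) * sin (u T e) * / e * e = sin (u T e) * sin (u T e)) by (field; lra).
    rewrite <- H0. apply Rmult_le_compat_r; lra. }
  assert (M*M*e*e <= M*M*r*e) by (assert (0 <= M*M) by apply Rle_0_sqr; apply Rmult_le_compat_r; [lra| apply Rmult_le_compat_l; lra]).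
  unfold B.
  set (I := RInt (ed a u ft fr T) e r) in *.
  set (J := RInt (ed a u ft fr T) e T) in *.
  set (L := RInt (ed a u ft fr T0) e T0) in *.
  set (k := 2/(a*a)) in *.
  assert (r*k*I <= r*k*(C1*T0 + (T0 - T) * (e * (1 + a * a * M * M) * M * M))).
  { apply Rmult_le_compat_l. apply Rmult_le_pos; lra. lra. }
  replace (e * (M * M * r + r * k * ((T0 - T) * ((1 + a * a * M * M) * M * M)))) with
     (M*M*r*e + r*k*((T0 - T) * (e * (1 + a * a * M * M) * M * M))) by ring.
  replace (((k * (C1 * T0) + 1 / 2) * r)) with (r*k*(C1*T0) + r/2) by (field; lra).
  lra.
Qed.

Lemma box (U : R -> R -> Prop) t r : open2 U -> U t r ->
  exists e, 0 < e /\ forall t' r', Rabs (t' - t) < e -> Rabs (r' - r) < e -> U t' r'.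
Proof. intros HO Hu. apply HO. exact Hu. Qed.

Lemma dt_unique (U : R -> R -> Prop) f g f2 g2 t r : open2 U -> dt_on U f g -> dt_on U f2 g2 ->
  (forall t r, U t r -> f t r = f2 t r) -> U t r -> g t r = g2 t r.
Proof.
  intros HO H1 H2 Heq Hu.
  destruct (box U t r HO Hu) as [e [ep He]].
  pose proof (dT U f g t r H1 Hu) as D1. pose proof (dT U f2 g2 t r H2 Hu) as D2.
  assert (D3 : is_derive (fun z => f2 z r) t (g t r)).
  { apply (is_derive_ext_loc (fun z => f z r)); [|exact D1].
    exists (mkposreal e ep). intros z Hz. apply Heq. apply He. exact Hz. rewrite Rminus_diag, Rabs_R0; lra. }
  rewrite <- (is_derive_unique _ _ _ D3). apply is_derive_unique. exact D2.
Qed.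

Lemma dr_unique (U : R -> R -> Prop) f g f2 g2 t r : open2 U -> dr_on U f g -> dr_on U f2 g2 ->
  (forall t r, U t r -> f t r = f2 t r) -> U t r -> g t r = g2 t r.
Proof.
  intros HO H1 H2 Heq Hu.
  destruct (box U t r HO Hu) as [e [ep He]].
  pose proof (dR U f g t r H1 Hu) as D1. pose proof (dR U f2 g2 t r H2 Hu) as D2.
  assert (D3 : is_derive (fun z => f2 t z) r (g t r)).
  { apply (is_derive_ext_loc (fun z => f t z)); [|exact D1].
    exists (mkposreal e ep). intros z Hz. apply Heq. apply He. rewrite Rminus_diag, Rabs_R0; lra. exact Hz. }
  rewrite <- (is_derive_unique _ _ _ D3). apply is_derive_unique. exact D2.
Qed.

Lemma DD1 (U : R -> R -> Prop) u fr frt x y : open2 U -> dr_on U u fr -> dt_on U fr frt -> U x y ->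
  is_derive (fun z => Derive (fun t => u z t) y) x (frt x y).
Proof.
  intros HO H1 H2 Hu. destruct (box U x y HO Hu) as [e [ep He]].
  apply (is_derive_ext_loc (fun z => fr z y)).
  - exists (mkposreal e ep). intros z Hz. symmetry. apply is_derive_unique. apply (dR U). exact H1.
    apply He. exact Hz. rewrite Rminus_diag, Rabs_R0; lra.
  - apply (dT U). exact H2. exact Hu.
Qed.

Lemma DD2 (U : R -> R -> Prop) u ft ftr x y : open2 U -> dt_on U u ft -> dr_on U ft ftr -> U x y ->
  is_derive (fun z => Derive (fun t => u t z) x) y (ftr x y).
Proof.
  intros HO H1 H2 Hu. destruct (box U x y HO Hu) as [e [ep He]].
  apply (is_derive_ext_loc (fun z => ft x z)).
  - exists (mkposreal e ep). intros z Hz. symmetry. apply is_derive_unique. apply (dT U). exact H1.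
    apply He. rewrite Rminus_diag, Rabs_R0; lra. exact Hz.
  - apply (dR U). exact H2. exact Hu.
Qed.

Lemma schwarz_U (U : R -> R -> Prop) u ft fr ftr frt x y : open2 U -> dt_on U u ft -> dr_on U u fr ->
  dr_on U ft ftr -> dt_on U fr frt -> cont2_on U ftr -> cont2_on U frt -> U x y -> ftr x y = frt x y.
Proof.
  intros HO Ht Hr Htr Hrt Ctr Crt Hu.
  destruct (box U x y HO Hu) as [e [ep He]].
  assert (S := Schwarz u x y).
  rewrite (is_derive_unique (fun z : R => Derive (fun t : R => u z t) y) x _ (DD1 U u fr frt x y HO Hr Hrt Hu)) in S.
  rewrite (is_derive_unique (fun z : R => Derive (fun t : R => u t z) x) y _ (DD2 U u ft ftr x y HO Ht Htr Hu)) in S.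
  symmetry. apply S.
  - exists (mkposreal e ep). intros u' v Hu' Hv. assert (HU : U u' v) by (apply He; auto).
    split; [|split; [|split]].
    + eexists. apply (dT U). exact Ht. exact HU.
    + eexists. apply (dR U). exact Hr. exact HU.
    + eexists. apply (DD1 U u fr frt); auto.
    + eexists. apply (DD2 U u ft ftr); auto.
  - apply continuity_2d_pt_ext_loc with (f := frt).
    + exists (mkposreal e ep). intros u' v Hu' Hv. symmetry. apply is_derive_unique. apply (DD1 U u fr frt); auto.
    + apply (c2U U); auto.
  - apply continuity_2d_pt_ext_loc with (f := ftr).
    + exists (mkposreal e ep). intros u' v Hu' Hv. symmetry. apply is_derive_unique. apply (DD2 U u ft ftr); auto.
    + apply (c2U U); auto.
Qed.

Lemma mkHyp (alpha T0 : R) (u ut ur utt urr : R -> R -> R) (U : R -> R -> Prop) :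
  0 < alpha -> 0 < T0 ->
  open2 U -> (forall t r, in_Omega T0 t r -> U t r) -> smooth_on U u ->
  dt_on U u ut -> dr_on U u ur -> dt_on U ut utt -> dr_on U ur urr ->
  (forall t r, in_Omega T0 t r -> 0 < r -> skyrme_eq alpha u ut ur utt urr t r) ->
  (forall t, 0 < t <= T0 -> u t 0 = 0) ->
  exists ft fr ftt ftr frt frr, Hyp alpha T0 u ft fr ftt ftr frt frr U.
Proof.
  intros ha hT0 HO HOm Hs Hut Hur Hutt Hurr Heq Hbd.
  destruct (Hs 3%nat) as [Cu [ft [fr [Dft [Dfr [[Cft [ftt [ftr [Dftt [Dftr [Cftt Cftr]]]]]] [Cfr [frt [frr [Dfrt [Dfrr [Cfrt Cfrr]]]]]]]]]]]].
  destruct Cftt as [Cftt _]. destruct Cftr as [Cftr _]. destruct Cfrt as [Cfrt _]. destruct Cfrr as [Cfrr _].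
  exists ft, fr, ftt, ftr, frt, frr. constructor; auto.
  - intros t r Hu. apply (schwarz_U U u ft fr); auto.
  - intros t r Ho Hr. assert (Hu : U t r) by auto.
    assert (E1 : forall t r, U t r -> ut t r = ft t r) by (intros; apply (dt_unique U u ut u ft); auto).
    assert (E2 : forall t r, U t r -> ur t r = fr t r) by (intros; apply (dr_unique U u ur u fr); auto).
    assert (E3 : utt t r = ftt t r) by (apply (dt_unique U ut utt ft ftt); auto).
    assert (E4 : urr t r = frr t r) by (apply (dr_unique U ur urr fr frr); auto).
    specialize (Heq t r Ho Hr). unfold skyrme_eq in *.
    rewrite <- (E1 t r Hu), <- (E2 t r Hu), <- E3, <- E4. exact Heq.
Qed.

Lemma cont0 (g : R -> R) L : g 0 = 0 -> derivable_pt_lim g 0 L ->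
  continuity_pt (fun r => g r ^ 2 / (2 * r ^ 2) * r) 0.
Proof.
  intros H0 HL eps ep.
  destruct (HL 1 Rlt_0_1) as [d Hd].
  set (C := Rabs L + 1).
  assert (HC : 0 < C) by (unfold C; pose proof (Rabs_pos L); lra).
  exists (Rmin d (eps/(C*C))). split. apply Rmin_pos. apply cond_pos. apply Rdiv_lt_0_compat; nra.
  intros x [[_ Hx0] Hx]. simpl in *. unfold R_dist in *.
  rewrite Rminus_0_r in Hx.
  assert (Hxd : Rabs x < d) by (eapply Rlt_le_trans; [exact Hx| apply Rmin_l]).
  assert (Hxe : Rabs x < eps/(C*C)) by (eapply Rlt_le_trans; [exact Hx| apply Rmin_r]).
  assert (hx : x <> 0) by auto.
  specialize (Hd x hx Hxd). rewrite Rplus_0_l, H0, Rminus_0_r in Hd.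
  set (q := g x / x) in *.
  assert (Hq : Rabs q < C).
  { unfold C. assert (Rabs q <= Rabs (q - L) + Rabs L) by (replace q with ((q - L) + L) at 1 by ring; apply Rabs_triang). lra. }
  match goal with |- Rabs ?E < _ => replace E with (q*q*x/2) by (unfold q; rewrite Rmult_0_r; field; auto) end.
  assert (Hq2 : q*q <= C*C).
  { assert (E : Rabs q * Rabs q = q*q) by (rewrite <- Rabs_mult; apply Rabs_right; apply Rle_ge, Rle_0_sqr).
    rewrite <- E. pose proof (Rabs_pos q). apply Rmult_le_compat; lra. }
  assert (E : Rabs q * Rabs q = q*q) by (rewrite <- Rabs_mult; apply Rabs_right; apply Rle_ge, Rle_0_sqr).
  unfold Rdiv. rewrite !Rabs_mult. rewrite E.
  rewrite (Rabs_right (/2)) by lra.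
  assert (Rabs x * (C*C) < eps).
  { apply (Rmult_lt_compat_r (C*C)) in Hxe; [|nra]. unfold Rdiv in Hxe. rewrite Rmult_assoc, Rinv_l in Hxe by nra. lra. }
  pose proof (Rabs_pos x). assert (0 <= q*q) by apply Rle_0_sqr. nra.
Qed.

Lemma c2_pow2 f x y : continuity_2d_pt f x y -> continuity_2d_pt (fun u v => f u v ^ 2) x y.
Proof. intros H. apply continuity_2d_pt_ext with (f := fun u v => f u v * f u v). intros; ring. c2. Qed.

Lemma ed_cont a T0 u ft fr ftt ftr frt frr U T x : Hyp a T0 u ft fr ftt ftr frt frr U ->
  0 < T <= T0 -> 0 <= x <= T -> continuity_pt (energy_density u T) x.
Proof.
  intros H HT Hx. assert (HU : U T x) by (apply (h_Om _ _ _ _ _ _ _ _ _ _ H); split; lra).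
  destruct (Req_dec x 0) as [->|hx].
  - unfold energy_density. apply (cont0 (fun r => sin (u T r)) (cos (u T 0) * fr T 0)).
    rewrite (h_bd _ _ _ _ _ _ _ _ _ _ H T HT). apply sin_0.
    apply is_derive_Reals. apply (G7 a T0 u ft fr ftt ftr frt frr U); auto.
  - apply cpt_of_c. apply (c2d_2 (fun t r => sin (u t r) ^ 2 / (2 * r ^ 2) * r)).
    pose proof (c2U _ _ _ _ (c_u _ _ _ _ _ _ _ _ _ _ H) HU).
    unfold Rdiv. apply continuity_2d_pt_mult. apply continuity_2d_pt_mult.
    apply c2_pow2. c2. apply continuity_2d_pt_inv. apply continuity_2d_pt_mult. c2.
    apply (continuity_2d_pt_ext (fun u v => v * v)). intros; ring. c2.
    cbv beta. apply Rmult_integral_contrapositive. split. lra. apply pow_nonzero. exact hx. c2.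
Qed.

Theorem corollary1 (alpha T0 : R) (u ut ur utt urr : R -> R -> R)
  (U : R -> R -> Prop) :
  0 < alpha -> 0 < T0 ->
  (* u is smooth on an open neighbourhood U of Omega *)
  open2 U -> (forall t r, in_Omega T0 t r -> U t r) -> smooth_on U u ->
  dt_on U u ut -> dr_on U u ur -> dt_on U ut utt -> dr_on U ur urr ->
  (* u solves the equation in Omega for r > 0 *)
  (forall t r, in_Omega T0 t r -> 0 < r -> skyrme_eq alpha u ut ur utt urr t r) ->
  (* boundary condition u(t,0) = 0 *)
  (forall t, 0 < t <= T0 -> u t 0 = 0) ->
  (forall T, 0 < T <= T0 -> inhabited (Riemann_integrable (energy_density u T) 0 T)) /\
  (forall eps, 0 < eps -> exists delta, 0 < delta /\
     forall T (pr : Riemann_integrable (energy_density u T) 0 T),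
       0 < T -> T < delta -> T <= T0 -> Rabs (RiemannInt pr) < eps).
Proof.
  intros ha hT0 HO HOm Hs Hut Hur Hutt Hurr Heq Hbd.
  destruct (mkHyp alpha T0 u ut ur utt urr U ha hT0 HO HOm Hs Hut Hur Hutt Hurr Heq Hbd)
    as [ft [fr [ftt [ftr [frt [frr H]]]]]].
  split.
  - intros T HT. constructor. apply continuity_implies_RiemannInt. lra.
    intros x Hx. apply (ed_cont alpha T0 u ft fr ftt ftr frt frr U); auto.
  - destruct (key alpha T0 u ft fr ftt ftr frt frr U H) as [K HK].
    intros eps heps. exists (eps / (Rabs K + 1)). split.
    { apply Rdiv_lt_0_compat. lra. pose proof (Rabs_pos K); lra. }
    intros T pr HT HTd HT0.
    assert (Hpt : forall x, 0 < x < T -> 0 <= energy_density u T x <= K/2).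
    { intros x Hx. specialize (HK T x ltac:(lra) ltac:(lra)). unfold energy_density.
      replace (sin (u T x) ^ 2 / (2 * x ^ 2) * x) with (sin (u T x) * sin (u T x) / (2*x)) by (field; lra).
      split. apply Rmult_le_pos. apply Rle_0_sqr. left; apply Rinv_0_lt_compat; lra.
      apply (Rmult_le_reg_r (2*x)). lra. unfold Rdiv. rewrite Rmult_assoc, Rinv_l by lra. lra. }
    assert (I0 : 0 <= RiemannInt pr).
    { pose proof (RiemannInt_P15 (RiemannInt_P14 0 T 0)) as E0. rewrite Rmult_0_l in E0.
      assert (RiemannInt (RiemannInt_P14 0 T 0) <= RiemannInt pr) by (apply RiemannInt_P19; [lra| intros x Hx; unfold fct_cte; apply Hpt; auto]).
      lra. }
    assert (I1 : RiemannInt pr <= K/2 * (T - 0)).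
    { pose proof (RiemannInt_P15 (RiemannInt_P14 0 T (K/2))) as E0.
      assert (RiemannInt pr <= RiemannInt (RiemannInt_P14 0 T (K/2))) by (apply RiemannInt_P19; [lra| intros x Hx; unfold fct_cte; apply Hpt; auto]).
      lra. }
    rewrite Rabs_right by lra.
    assert (HK1 : 0 < Rabs K + 1) by (pose proof (Rabs_pos K); lra).
    assert (T * (Rabs K + 1) < eps).
    { apply (Rmult_lt_compat_r (Rabs K + 1)) in HTd; auto. unfold Rdiv in HTd. rewrite Rmult_assoc, Rinv_l in HTd by lra. lra. }
    assert (K <= Rabs K) by apply Rle_abs.
    nra.
Qed.
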